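(* Let $l,l'$ be nonparallel lines in the plane, and let $B\in l$, $B'\in l'$ be points, neither of which is the intersection point of $l$ and $l'$. (1) The function $X\mapsto \mathrm{disprod}_{l,l'}(X)$ is strictly concave on the segment $\overline{BB'}$ and is maximized there at the midpoint of $B$ and $B'$. (2) Suppose moreover that $X,X'$ are two distinct points of $\overline{BB'}$ such that $B,X,X',B'$ lie in this order. Then: (a) if $\mathrm{disprod}_{l,l'}$, restricted to $\overline{XX'}$, is maximized at $X'$, then $|BX'|\le \frac12|BB'|$; (b) $|BX|-|B'X'|$ and $\mathrm{disprod}_{l,l'}(X)-\mathrm{disprod}_{l,l'}(X')$ have the same sign.
   Context: For a line $l$ and point $X$, $d_l(X)$ denotes the distance from $X$ to $l$. For two lines $l,l'$, $\mathrm{disprod}_{l,l'}(X)=d_l(X)\cdot d_{l'}(X)$. *)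

(* Defs.v *)
From HB Require Import structures.
From mathcomp Require Import all_boot all_order all_algebra.
From mathcomp Require Import classical_sets reals.
Set Implicit Arguments. Unset Strict Implicit. Unset Printing Implicit Defensive.
Import Order.TTheory GRing.Theory Num.Theory.
Local Open Scope ring_scope.
Local Open Scope classical_set_scope.

Section Plane.
Variable R : realType.

Definition pt := (R * R)%type.

Definition dist (P Q : pt) : R :=
  Num.sqrt ((P.1 - Q.1) ^+ 2 + (P.2 - Q.2) ^+ 2).

(* The line through P with direction d (d <> 0 assumed where used). *)
Definition line (P d : pt) : set pt :=
  [set Y | exists t : R, Y = (P.1 + t * d.1, P.2 + t * d.2)].

Definition nonparallel (d d' : pt) : Prop := d.1 * d'.2 - d.2 * d'.1 != 0.

Definition dist_line (l : set pt) (X : pt) : R := inf [set dist X Y | Y in l].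

Definition disprod (l l' : set pt) (X : pt) : R := dist_line l X * dist_line l' X.

Definition seg_pt (A B : pt) (t : R) : pt :=
  (A.1 + t * (B.1 - A.1), A.2 + t * (B.2 - A.2)).

Definition segment (A B : pt) : set pt :=
  [set Y | exists t : R, 0 <= t <= 1 /\ Y = seg_pt A B t].

Definition comb (a : R) (X Y : pt) : pt :=
  (a * X.1 + (1 - a) * Y.1, a * X.2 + (1 - a) * Y.2).

Definition midpoint (A B : pt) : pt := ((A.1 + B.1) / 2, (A.2 + B.2) / 2).

End Plane.

(* Main.v *)
Require Import Defs.
From HB Require Import structures.
From mathcomp Require Import all_boot all_order all_algebra.
From mathcomp Require Import classical_sets reals.
From mathcomp Require Import ring lra.
Import Order.TTheory GRing.Theory Num.Theory.
Local Open Scope ring_scope.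
Local Open Scope classical_set_scope.
Set Implicit Arguments.

Lemma nd_gt0 (R : realType) (d : pt R) : d != (0,0) -> 0 < d.1^+2 + d.2^+2.
Proof.
case: d => a b /= H.
have [a0|ha] := eqVneq a 0.
  have hb : b != 0.
    apply/eqP => hb; move: H; rewrite a0 hb; by rewrite eqxx.
  by rewrite a0 expr0n /= add0r exprn_even_gt0.
have : 0 < a ^+ 2 by rewrite exprn_even_gt0.
have := sqr_ge0 b. lra.
Qed.

Lemma dist_line_eq (R : realType) (P d X : pt R) : d != (0,0) ->
  dist_line (line P d) X =
  Num.sqrt ((d.1*(X.2-P.2) - d.2*(X.1-P.1))^+2 / (d.1^+2 + d.2^+2)).
Proof.
move=> /nd_gt0 hn.
set c := (d.1*(X.2-P.2) - d.2*(X.1-P.1)).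
set nd := d.1^+2 + d.2^+2.
set m := Num.sqrt (c ^+ 2 / nd).
have lb : lbound [set dist X Y | Y in line P d] m.
  move=> _ [Y [s ->] <-]; rewrite /dist /m /=.
  apply: ler_wsqrtr.
  rewrite ler_pdivrMr //.
  have -> : c = d.1 * (X.2 - (P.2 + s * d.2)) - d.2 * (X.1 - (P.1 + s * d.1)).
    by rewrite /c; ring.
  set u := X.1 - _; set v := X.2 - _.
  have : 0 <= (d.1 * u + d.2 * v) ^+ 2 by apply: sqr_ge0.
  rewrite /nd. nra.
have mem : [set dist X Y | Y in line P d] m.
  set s := ((X.1 - P.1) * d.1 + (X.2 - P.2) * d.2) / nd.
  exists (P.1 + s * d.1, P.2 + s * d.2); first by exists s.
  rewrite /dist /m /=; congr Num.sqrt.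
  have hn0 : nd != 0 by exact: lt0r_neq0.
  move: hn0; rewrite /s /c /nd => hn0; field; exact: hn0.
apply: le_anti; apply/andP; split.

  by apply: (ge_inf _ mem); exists m.
apply: lb_le_inf lb; by exists m.
Qed.

Lemma sqrt_sq_mul (R : realType) (x y : R) : 0 <= y ->
  Num.sqrt (x ^+ 2 * y) = `|x| * Num.sqrt y.
Proof. by move=> hy; rewrite sqrtrM ?sqr_ge0 // sqrtr_sqr. Qed.

Lemma dist_seg1 (R : realType) (B B' : pt R) t :
  dist B (seg_pt B B' t) = `|t| * dist B B'.
Proof.
rewrite /dist /seg_pt /= -sqrt_sq_mul; last by rewrite addr_ge0 ?sqr_ge0.
by congr Num.sqrt; ring.
Qed.

Lemma dist_seg2 (R : realType) (B B' : pt R) t :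
  dist B' (seg_pt B B' t) = `|1 - t| * dist B B'.
Proof.
rewrite /dist /seg_pt /= -sqrt_sq_mul; last by rewrite addr_ge0 ?sqr_ge0.
by congr Num.sqrt; ring.
Qed.

Definition cr {R : realType} (d Q P : pt R) := d.1*(Q.2-P.2) - d.2*(Q.1-P.1).

Lemma cr_line (R : realType) (P d Q : pt R) : line P d Q -> cr d Q P = 0.
Proof. by case=> s ->; rewrite /cr /=; ring. Qed.

Lemma cr_nline (R : realType) (P d Q : pt R) : d != (0,0) ->
  ~ line P d Q -> cr d Q P != 0.
Proof.
move=> /nd_gt0 hn hQ; apply/eqP => hc; apply: hQ.
have hn0 : d.1 ^+ 2 + d.2 ^+ 2 != 0 by exact: lt0r_neq0.
exists (((Q.1 - P.1) * d.1 + (Q.2 - P.2) * d.2) / (d.1 ^+ 2 + d.2 ^+ 2)).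
move: hc; rewrite /cr => hc.
case: Q hc => q1 q2 /= hc; congr (_, _).
  apply/eqP; rewrite -subr_eq0; apply/eqP.
  have -> : q1 - (P.1 + ((q1 - P.1) * d.1 + (q2 - P.2) * d.2) / (d.1 ^+ 2 + d.2 ^+ 2) * d.1)
    = - d.2 * (d.1 * (q2 - P.2) - d.2 * (q1 - P.1)) / (d.1 ^+ 2 + d.2 ^+ 2).
    by field.
  by rewrite hc mulr0 mul0r.
apply/eqP; rewrite -subr_eq0; apply/eqP.
have -> : q2 - (P.2 + ((q1 - P.1) * d.1 + (q2 - P.2) * d.2) / (d.1 ^+ 2 + d.2 ^+ 2) * d.2)
  = d.1 * (d.1 * (q2 - P.2) - d.2 * (q1 - P.1)) / (d.1 ^+ 2 + d.2 ^+ 2).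
  by field.
by rewrite hc mulr0 mul0r.
Qed.

Lemma cr_seg (R : realType) (d P B B' : pt R) t :
  cr d (seg_pt B B' t) P = (1 - t) * cr d B P + t * cr d B' P.
Proof. rewrite /cr /seg_pt /=; ring. Qed.

Lemma dl_seg (R : realType) (P d B B' : pt R) t : d != (0,0) -> cr d B P = 0 ->
  dist_line (line P d) (seg_pt B B' t) =
  `|t| * Num.sqrt (cr d B' P ^+ 2 / (d.1 ^+ 2 + d.2 ^+ 2)).
Proof.
move=> hd hB; rewrite dist_line_eq //.
have := cr_seg d P B B' t; rewrite /cr => ->.
rewrite /cr in hB; rewrite hB mulr0 add0r.
rewrite exprMn -mulrA (@sqrt_sq_mul _ t) //.
by apply: divr_ge0; [apply: sqr_ge0 | apply: ltW; apply: nd_gt0].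
Qed.

Lemma dl_seg' (R : realType) (P d B B' : pt R) t : d != (0,0) -> cr d B' P = 0 ->
  dist_line (line P d) (seg_pt B B' t) =
  `|1 - t| * Num.sqrt (cr d B P ^+ 2 / (d.1 ^+ 2 + d.2 ^+ 2)).
Proof.
move=> hd hB; rewrite dist_line_eq //.
have := cr_seg d P B B' t; rewrite /cr => ->.
rewrite /cr in hB; rewrite hB mulr0 addr0.
rewrite exprMn -mulrA (@sqrt_sq_mul _ (1 - t)) //.
by apply: divr_ge0; [apply: sqr_ge0 | apply: ltW; apply: nd_gt0].
Qed.

Lemma K_gt0 (R : realType) (d Q P : pt R) : d != (0,0) -> cr d Q P != 0 ->
  0 < Num.sqrt (cr d Q P ^+ 2 / (d.1 ^+ 2 + d.2 ^+ 2)).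
Proof.
move=> hd hc; rewrite sqrtr_gt0; apply: divr_gt0; last exact: nd_gt0.
by rewrite exprn_even_gt0.
Qed.
Unset Implicit Arguments.
Theorem lemma3 (R : realType) (P d P' d' B B' : pt R) :
  d != (0, 0) -> d' != (0, 0) -> nonparallel d d' ->
  line P d B -> line P' d' B' ->
  ~ line P' d' B -> ~ line P d B' ->
  let f := disprod (line P d) (line P' d') in
  (* (1) strict concavity on [B B'] and maximum at the midpoint *)
  ((forall (X Y : pt R) (a : R), segment B B' X -> segment B B' Y -> X != Y ->
      0 < a < 1 -> a * f X + (1 - a) * f Y < f (comb a X Y)) /\
   (forall X : pt R, segment B B' X -> f X <= f (midpoint B B'))) /\
  (* (2) for X, X' distinct on [B B'] with B, X, X', B' in this order *)
  (forall (X X' : pt R) (t t' : R), 0 <= t -> t < t' -> t' <= 1 ->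
      X = seg_pt B B' t -> X' = seg_pt B B' t' ->
      ((forall Y : pt R, segment X X' Y -> f Y <= f X') ->
         dist B X' <= dist B B' / 2) /\
      Num.sg (dist B X - dist B' X') = Num.sg (f X - f X')).
Proof.
move=> hd hd' _ hB hB' nB nB' f.
have c1 := cr_line hB; have c2 := cr_line hB'.
have n1 := cr_nline hd nB'; have n2 := cr_nline hd' nB.
set K := Num.sqrt (cr d B' P ^+ 2 / (d.1 ^+ 2 + d.2 ^+ 2)) *
         Num.sqrt (cr d' B P' ^+ 2 / (d'.1 ^+ 2 + d'.2 ^+ 2)).
have K0 : 0 < K by rewrite mulr_gt0 // K_gt0.
have fE : forall t, 0 <= t <= 1 -> f (seg_pt B B' t) = t * (1 - t) * K.
  move=> t /andP [t0 t1].
  rewrite /f /disprod (dl_seg _ _ _ _ _ hd c1) (dl_seg' _ _ _ _ _ hd' c2).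
  rewrite (ger0_norm t0) ger0_norm ?subr_ge0 // /K; ring.
have Lb0 : 0 < dist B B'.
  rewrite /dist sqrtr_gt0 lt_def addr_ge0 ?sqr_ge0 // andbT.
  apply/negP => /eqP h.
  have e1 : B.1 = B'.1.
    apply/eqP; rewrite -subr_eq0 -sqrf_eq0; apply/eqP.
    have := sqr_ge0 (B.1 - B'.1); have := sqr_ge0 (B.2 - B'.2); lra.
  have e2 : B.2 = B'.2.
    apply/eqP; rewrite -subr_eq0 -sqrf_eq0; apply/eqP.
    have := sqr_ge0 (B.1 - B'.1); have := sqr_ge0 (B.2 - B'.2); lra.
  by move: n1; rewrite /cr -e1 -e2 -[X in _ - X]/(d.2 * (B.1 - P.1)) ; rewrite -/(cr d B P) c1 eqxx.
split; [split|].
- move=> X Y a [s [/andP [s0 s1] ->]] [u [/andP [u0 u1] ->]] hXY /andP [a0 a1].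
  have su : s != u by apply: contraNneq hXY => ->.
  have -> : comb a (seg_pt B B' s) (seg_pt B B' u) = seg_pt B B' (a * s + (1 - a) * u).
    rewrite /comb /seg_pt /=; congr (_, _); ring.
  rewrite !fE ?s0 ?s1 ?u0 ?u1 //; last first.
    apply/andP; split; nra.
  have : 0 < (s - u) ^+ 2 by rewrite exprn_even_gt0 // subr_eq0.
  move=> h; rewrite -subr_gt0.
  have -> : (a * s + (1 - a) * u) * (1 - (a * s + (1 - a) * u)) * K -
     (a * (s * (1 - s) * K) + (1 - a) * (u * (1 - u) * K)) = a * (1 - a) * (s - u) ^+ 2 * K.
    by ring.
  apply: mulr_gt0 => //; apply: mulr_gt0 => //; apply: mulr_gt0 => //; lra.
- move=> X [s [/andP [s0 s1] ->]].
  have -> : midpoint B B' = seg_pt B B' (1/2).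
    by rewrite /midpoint /seg_pt; congr (_, _); field.
  rewrite !fE ?s0 ?s1 //; last lra.
  rewrite -subr_ge0.
  have -> : 1 / 2 * (1 - 1 / 2) * K - s * (1 - s) * K = (s - 1/2) ^+ 2 * K by field => //.
  by rewrite mulr_ge0 ?sqr_ge0 // ltW.
move=> X X' t t' t0 tt' t'1 -> ->.
split.
  move=> H.
  have ht' : t' <= 1 / 2.
    rewrite leNgt; apply/negP => ht'.
    have [ht|ht] := lerP t (1 - t').
      have := H (seg_pt B B' (1/2)).
      rewrite !fE; try (apply/andP; split; lra).
      have : 0 < (t' - 1/2) ^+ 2 by rewrite exprn_even_gt0 // subr_eq0; apply/eqP; lra.
      move=> h1 h2.
      have : 1 / 2 * (1 - 1 / 2) * K <= t' * (1 - t') * K.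
        apply: h2; exists ((1/2 - t) / (t' - t)).
        split.
          apply/andP; split.
            by apply: divr_ge0; lra.
          rewrite ler_pdivrMr; lra.
        rewrite /seg_pt /=; congr (_, _); field; try done; apply/eqP; lra.
      have -> : t' * (1 - t') * K = 1 / 2 * (1 - 1 / 2) * K - (t' - 1/2) ^+ 2 * K by field => //.
      have : 0 < (t' - 1 / 2) ^+ 2 * K by rewrite mulr_gt0.
      lra.
    have := H (seg_pt B B' t).
    rewrite !fE; try (apply/andP; split; lra).
    move=> h2.
    have : t * (1 - t) * K <= t' * (1 - t') * K.
      apply: h2; exists 0; split; first by rewrite lexx ler01.
      rewrite /seg_pt /=; congr (_, _); ring.
    rewrite ler_pM2r //.
    have : 0 < (t' - t) * (t' + t - 1) by rewrite mulr_gt0 // ; lra.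
    nra.
  rewrite dist_seg1 ger0_norm; last lra.
  rewrite mulrC ler_pM2l //; lra.
rewrite dist_seg1 dist_seg2 !fE; try (apply/andP; split; lra).
rewrite ger0_norm; last lra.
rewrite ger0_norm; last lra.
have -> : t * dist B B' - (1 - t') * dist B B' = (t + t' - 1) * dist B B' by ring.
have -> : t * (1 - t) * K - t' * (1 - t') * K = (t + t' - 1) * ((t' - t) * K) by ring.
have hp : 0 < (t' - t) * K by rewrite mulr_gt0 // subr_gt0.
by rewrite (sgrM (t + t' - 1) (dist B B')) (sgrM (t + t' - 1)) (gtr0_sg Lb0) (gtr0_sg hp).
Qed.
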